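(* Consider the following network model. Let $q$ be a prime power, $K\ge1$, $L\ge1$, $N_{\mathrm S}\ge K$, $N_{\mathrm R}\ge1$. A source S draws $N_{\mathrm S}$ coefficient vectors i.i.d. uniformly from $\mathbb{F}_q^K$ and broadcasts one packet per vector. Each packet is received by the destination D and by each relay $\mathrm R_j$ ($j=1,\dots,L$) according to erasure events that are independent of the coefficients. Relay $\mathrm R_j$, having received $m_j$ packets with coefficient matrix $\mathbf{C}_{\mathrm S\to\mathrm R_j}\in\mathbb{F}_q^{m_j\times K}$, draws $\mathbf{G}_j\in\mathbb{F}_q^{N_{\mathrm R}\times m_j}$ with i.i.d. uniform entries (independent of everything else) and transmits the $N_{\mathrm R}$ rows of $\mathbf{G}_j\mathbf{C}_{\mathrm S\to\mathrm R_j}$; D receives $m'_j$ of them. D stacks the $m_{\mathrm D}$ coefficient vectors received directly from S and all $m'=\sum_j m'_j$ recoded vectors received from the relays into the matrix $\mathbf{C}_{\mathrm D}$. Let $m$ be the number of distinct source packets received by at least one relay and $m_{\mathrm{RD}}$ the number of those also received by D. Let $X$ be the event $\operatorname{rank}(\mathbf{C}_{\mathrm D})=K$. Then, conditional on the erasure pattern (so that $m,m_{\mathrm D},m_{\mathrm{RD}},m'_1,\dots,m'_L$ are fixed), $$\Pr[X]\le \mathbb{P}^{(2)}\big(m'+m_{\mathrm D},\; m-m_{\mathrm{RD}}+m_{\mathrm D},\; m_{\mathrm D};\,K\big),$$ where for nonnegative integers $m_1,m_2\ge m_{12}$, $$\mathbb{P}^{(2)}(m_1,m_2,m_{12};K)=\sum_{i=\max(0,\,K-m_1+m_{12},\,K-m_2+m_{12})}^{\min(m_{12},K)}\mathbb{P}_i(m_{12},K)\,\mathbb{P}(m_1-m_{12},K-i)\,\mathbb{P}(m_2-m_{12},K-i),$$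 with $\mathbb{P}(a,b)=\prod_{i=0}^{b-1}(1-q^{i-a})$ and $\mathbb{P}_r(a,b)=q^{-a(b-r)}\prod_{i=0}^{r-1}\frac{q^{b-i}-1}{q^{r-i}-1}\prod_{i=0}^{r-1}(1-q^{i-a})$.
   Context: $\mathbb{P}(a,b)$ is the probability that an $a\times b$ matrix with i.i.d. uniform entries over $\mathbb{F}_q$ has rank $b$, and $\mathbb{P}_r(a,b)$ the probability it has rank $r$. $\mathbb{P}^{(2)}(m_1,m_2,m_{12};K)$ is the probability that two uniformly random matrices with $m_1$ and $m_2$ rows and $K$ columns, sharing exactly $m_{12}$ common rows, are simultaneously of rank $K$. *)

(* Defs.v *)
From mathcomp Require Import all_boot all_order all_algebra.
Set Implicit Arguments. Unset Strict Implicit. Unset Printing Implicit Defensive.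
Import Order.TTheory GRing.Theory Num.Theory.
Local Open Scope ring_scope.

(* P(a,b) = prod_{i=0}^{b-1} (1 - q^(i-a)) : probability that an a x b
   uniform matrix over F_q has rank b. *)
Definition Pfull (q a b : nat) : rat :=
  \prod_(i < b) (1 - (q%:R : rat) ^ (i%:Z - a%:Z)).

Definition Prank (q a b r : nat) : rat :=
  (q%:R : rat) ^ (- (a%:Z * (b%:Z - r%:Z)))
  * (\prod_(i < r) (((q%:R : rat) ^ (b%:Z - i%:Z) - 1)
                     / ((q%:R : rat) ^ (r%:Z - i%:Z) - 1)))
  * \prod_(i < r) (1 - (q%:R : rat) ^ (i%:Z - a%:Z)).

(* P^(2)(m1,m2,m12;K); the lower summation bound
   max(0, K-m1+m12, K-m2+m12) is written with truncated nat subtraction. *)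
Definition P2 (q m1 m2 m12 K : nat) : rat :=
  \sum_(maxn ((K + m12) - m1) ((K + m12) - m2) <= i < (minn m12 K).+1)
     Prank q m12 K i * Pfull q (m1 - m12) (K - i) * Pfull q (m2 - m12) (K - i).

Definition subrows (F : finFieldType) (N K : nat) (A : {set 'I_N})
  (C : 'M[F]_(N, K)) : 'M[F]_(#|A|, K) :=
  rowsub (fun i : 'I_#|A| => enum_val i) C.

(* Coefficient matrix C_D at the destination, given the source coefficient
   matrix C (N_S x K), the relay recoding matrices G j (N_R x m_j), the
   set AD of source packets received directly by D, the sets A j of source
   packets received by relay j, and the sets B j of relay-j packets
   received by D. *)
Definition CD (F : finFieldType) (NS NR K L : nat) (AD : {set 'I_NS})
  (A : 'I_L -> {set 'I_NS}) (B : 'I_L -> {set 'I_NR})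
  (C : 'M[F]_(NS, K))
  (G : {dffun forall j : 'I_L, 'M[F]_(NR, #|A j|)}) :=
  col_mx (subrows AD C)
    (\mxcol_(j < L) subrows (B j) (G j *m subrows (A j) C)).
Arguments CD {F NS NR K L} AD A B C G.

Definition PrX (F : finFieldType) (NS NR K L : nat) (AD : {set 'I_NS})
  (A : 'I_L -> {set 'I_NS}) (B : 'I_L -> {set 'I_NR}) : rat :=
  (#|[set x : 'M[F]_(NS, K) * {dffun forall j : 'I_L, 'M[F]_(NR, #|A j|)}
        | \rank (CD AD A B x.1 x.2) == K]|%:R)
  / (#|{: 'M[F]_(NS, K) * {dffun forall j : 'I_L, 'M[F]_(NR, #|A j|)}}|%:R).
Arguments PrX F {NS NR} K {L} AD A B.

(* Main.v *)
Require Import Defs.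
From mathcomp Require Import all_boot all_order all_algebra.
From mathcomp Require Import zify ring lra.
Set Implicit Arguments. Unset Strict Implicit. Unset Printing Implicit Defensive.
Import Order.TTheory GRing.Theory Num.Theory.
Local Open Scope ring_scope.

Section Num.
Variable q : nat.
Hypothesis q1 : (1 < q)%N.
Local Notation Q := (q%:R : rat).

Lemma Qneq0 : Q != 0. Proof. by rewrite pnatr_eq0; lia. Qed.
Lemma Qgt1 : 1 < Q. Proof. by rewrite ltr1n. Qed.

Lemma pz (a b : nat) : Q ^ (a%:Z - b%:Z) = Q ^+ a / Q ^+ b.
Proof. by rewrite expfzDr ?Qneq0 // -exprnN. Qed.

Lemma Pfull_rec n d :
  Pfull q n.+1 d.+1 = (Q ^+ d.+1)^-1 * Pfull q n d.+1
                       + (1 - (Q ^+ d.+1)^-1) * Pfull q n d.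
Proof.
rewrite /Pfull big_ord_recl big_ord_recr /=.
have -> : \prod_(i < d) (1 - Q ^ ((bump 0 i)%:Z - n.+1%:Z)) =
          \prod_(i < d) (1 - Q ^ (i%:Z - n%:Z)).
  apply: eq_bigr => i _; congr (1 - Q ^ _); rewrite /bump /=; lia.
set P := \prod_(i < d) _.
rewrite !pz.
have h0 := Qneq0.
have h3 : Q ^+ n != 0 by rewrite expf_neq0 ?Qneq0.
have h4 : Q ^+ d != 0 by rewrite expf_neq0 ?Qneq0.
rewrite !exprS expr0; field. all: by rewrite ?h0 ?h3 ?h4.
Qed.

Lemma pzm x y z : (z <= y)%N ->
  Q ^ (- (x%:Z * (y%:Z - z%:Z))) = (Q ^+ (x * (y - z)))^-1.
Proof. by move=> zy; rewrite subzn // -PoszM -exprnN. Qed.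

Lemma Prank0 a b : Prank q a.+1 b 0 = (Q ^+ b)^-1 * Prank q a b 0.
Proof.
rewrite /Prank !big_ord0 !mulr1 subr0 -!PoszM -!exprnN -invrM ?unitfE ?expf_neq0 ?Qneq0 //.
by rewrite -exprD mulSn addnC.
Qed.

Lemma Prank_rec a b r : (r < b)%N ->
  Prank q a.+1 b r.+1 = (Q ^+ (b - r.+1))^-1 * Prank q a b r.+1
                        + (1 - (Q ^+ (b - r))^-1) * Prank q a b r.
Proof.
move=> rb; rewrite /Prank !prodf_div.
rewrite (big_ord_recr r (fun i : 'I_r.+1 => Q ^ (b%:Z - i%:Z) - 1)) /=.
rewrite (big_ord_recl r (fun i : 'I_r.+1 => Q ^ (r.+1%:Z - i%:Z) - 1)) /=.
rewrite (big_ord_recl r (fun i : 'I_r.+1 => 1 - Q ^ (i%:Z - a.+1%:Z))) /=.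
rewrite (big_ord_recr r (fun i : 'I_r.+1 => 1 - Q ^ (i%:Z - a%:Z))) /=.
have -> : \prod_(i < r) (Q ^ (r.+1%:Z - (bump 0 i)%:Z) - 1) =
          \prod_(i < r) (Q ^ (r%:Z - i%:Z) - 1).
  apply: eq_bigr => i _; congr (Q ^ _ - 1); rewrite /bump /=; lia.
have -> : \prod_(i < r) (1 - Q ^ ((bump 0 i)%:Z - a.+1%:Z)) =
          \prod_(i < r) (1 - Q ^ (i%:Z - a%:Z)).
  apply: eq_bigr => i _; congr (1 - Q ^ _); rewrite /bump /=; lia.
set X := \prod_(i < r) (Q ^ (b%:Z - i%:Z) - 1).
set Z := \prod_(i < r) (Q ^ (r%:Z - i%:Z) - 1).
set P := \prod_(i < r) (1 - Q ^ (i%:Z - a%:Z)).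
have hZ : Z != 0.
  apply/prodf_neq0 => i _; rewrite pz -expfB // subr_eq0.
  have := exprn_egt1 (r - i) Qgt1.
  by rewrite subn_eq0 -ltnNge ltn_ord => /gt_eqF ->.
rewrite !pzm; try lia.
have [d ->] : exists d, (b = r.+1 + d)%N by exists (b - r.+1)%N; lia.
have -> : (r.+1 + d - r.+1 = d)%N by lia.
have -> : (r.+1 + d - r = d.+1)%N by lia.
rewrite !pz.
have -> : (a.+1 * d = a * d + d)%N by lia.
have -> : (a * d.+1 = a * d + a)%N by lia.
rewrite !exprD !exprS !expr0.
have h0 := Qneq0.
have hA : Q ^+ a != 0 by rewrite expf_neq0.
have hB : Q ^+ d != 0 by rewrite expf_neq0.
have hC : Q ^+ r != 0 by rewrite expf_neq0.
have hD : Q ^+ (a * d) != 0 by rewrite expf_neq0.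
have hE : Q * Q ^+ r - 1 != 0.
  rewrite subr_eq0 -exprS; have := exprn_egt1 r.+1 Qgt1.
  by move=> /= /gt_eqF ->.
move: hE; set x := Q; set A := Q ^+ a; set B := Q ^+ d; set C := Q ^+ r;
  set D := Q ^+ (a * d) => hE.
rewrite /x; field.
by rewrite hZ hE h0 hA hB hC hD.
Qed.


Variable K : nat.
Definition pp r : rat := (Q ^+ (K - r))^-1.
Definition Tr (h : nat -> rat) r := pp r * h r + (1 - pp r) * h r.+1.
Definition E n h := iter n Tr h.
Definition mono (h : nat -> rat) := forall r, h r <= h r.+1.
Definition ind r : rat := (K <= r)%N%:R.

Lemma pp_ge0 r : 0 <= pp r.
Proof. by rewrite invr_ge0 exprn_ge0 // ler0n. Qed.
Lemma pp_le1 r : pp r <= 1.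
Proof. by rewrite invf_le1 ?exprn_gt0 ?exprn_ege1 ?ltr0n ?ler1n //; lia. Qed.
Lemma ppK : pp K = 1.
Proof. by rewrite /pp subnn expr0 invr1. Qed.

Lemma Tr_mono h : mono h -> mono (Tr h).
Proof.
move=> mh r; rewrite /Tr.
have a1 := pp_ge0 r; have a2 := pp_le1 r.
have b1 := pp_ge0 r.+1; have b2 := pp_le1 r.+1.
have c1 := mh r; have c2 := mh r.+1.
nra.
Qed.

Lemma Tr_ge0 h : (forall r, 0 <= h r) -> forall r, 0 <= Tr h r.
Proof.
move=> hh r; rewrite /Tr.
have a1 := pp_ge0 r; have a2 := pp_le1 r.
have := hh r; have := hh r.+1; nra.
Qed.

Lemma E_mono n h : mono h -> mono (E n h).
Proof. by move=> mh; elim: n => //= n IH; apply: Tr_mono. Qed.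

Lemma E_ge0 n h : (forall r, 0 <= h r) -> forall r, 0 <= E n h r.
Proof. by move=> hh; elim: n => //= n IH; apply: Tr_ge0. Qed.

Lemma E_add m n h : E (m + n) h = E m (E n h).
Proof. by rewrite /E iterD. Qed.

Lemma ind_mono : mono ind.
Proof. by move=> r; rewrite /ind ler_nat; case: (leqP K r) => //; lia. Qed.

Lemma ind_ge0 r : 0 <= ind r.
Proof. by rewrite /ind ler0n. Qed.

Lemma Pfull0S d : Pfull q 0 d.+1 = 0.
Proof. by rewrite /Pfull big_ord_recl /= (_ : (0%:Z - 0%:Z) = 0) // expr0z subrr mul0r. Qed.

Lemma Pfull_0 n : Pfull q n 0 = 1.
Proof. by rewrite /Pfull big_ord0. Qed.

Lemma E_ind n r : (r <= K)%N -> E n ind r = Pfull q n (K - r).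
Proof.
elim: n r => [|n IH] r rK /=.
  rewrite /ind; case: (ltngtP K r) => Kr; first by exfalso; lia.
    have -> : (K - r = (K - r.+1).+1)%N by lia.
    by rewrite Pfull0S.
  by rewrite Kr subnn Pfull_0.
rewrite /Tr; case: (ltngtP K r) => Kr; first by exfalso; lia.
  rewrite IH // IH //.
  have -> : (K - r = (K - r.+1).+1)%N by lia.
  rewrite Pfull_rec /pp.
  by have -> : (K - r = (K - r.+1).+1)%N by lia.
by rewrite -Kr ppK IH // subnn !Pfull_0 mul1r subrr mul0r addr0.
Qed.

Lemma Prank_0 r : Prank q 0 K r.+1 = 0.
Proof. rewrite /Prank (big_ord_recl r (fun i : 'I_r.+1 => 1 - Q ^ (i%:Z - 0%:Z))) /= (_ : (0%:Z - 0%:Z) = 0) // expr0z subrr mul0r. by rewrite mul0r mulr0. Qed.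

Lemma Prank_00 : Prank q 0 K 0 = 1.
Proof. by rewrite /Prank !big_ord0 mul0r oppr0 expr0z !mulr1. Qed.

Lemma E_rank n h : E n h 0 = \sum_(i < K.+1) Prank q n K i * h i.
Proof.
elim: n h => [|n IH] h.
  rewrite big_ord_recl /= Prank_00 mul1r big1 ?addr0 // => i _.
  by rewrite /bump /= Prank_0 mul0r.
rewrite /E iterSr -/(E n (Tr h)) IH /Tr.
under eq_bigr do rewrite mulrDr.
rewrite big_split /=.
rewrite big_ord_recl [X in _ + X = _]big_ord_recr /= ppK subrr !mul0r mulr0 addr0.
rewrite [RHS]big_ord_recl /= Prank0 -addrA; congr (_ + _).
  by rewrite /pp subn0; ring.
rewrite -big_split /=; apply: eq_bigr => i _.
rewrite /bump /= add1n Prank_rec // /pp; ring.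
Qed.

Lemma Pfull_zero a b : (a < b)%N -> Pfull q a b = 0.
Proof.
move=> ab; rewrite /Pfull (bigD1 (Ordinal ab)) //= subrr expr0z subrr mul0r //.
Qed.

Lemma Prank_zero a b r : (a < r)%N -> Prank q a b r = 0.
Proof.
move=> ar; rewrite /Prank [X in _ * X](bigD1 (Ordinal ar) (P := xpredT)) //= subrr expr0z subrr mul0r mulr0 //.
Qed.

Lemma P2_eq m' t mD : \sum_(i < K.+1) Prank q mD K i * (Pfull q m' (K - i) * Pfull q t (K - i))
  = P2 q (m' + mD) (t + mD) mD K.
Proof.
rewrite /P2 !subnDr !addnK.
set lo := maxn (K - m') (K - t).
set hi := (minn mD K).+1.
set G := fun i : nat => Prank q mD K i * Pfull q m' (K - i) * Pfull q t (K - i).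
have z1 : forall i, (i < lo)%N -> G i = 0.
  move=> i ilo; have [h|h] : (i < K - m')%N \/ (i < K - t)%N by rewrite /lo in ilo; lia.
    by rewrite /G (Pfull_zero (a := m')) ?mulr0 ?mul0r //; lia.
  by rewrite /G (Pfull_zero (a := t)) ?mulr0 //; lia.
have z2 : forall i, (hi <= i)%N -> (i <= K)%N -> G i = 0.
  move=> i; rewrite /hi => h1 h2.
  by rewrite /G Prank_zero ?mul0r //; lia.
rewrite (eq_bigr (fun i : 'I_K.+1 => G i)); last by move=> i _; rewrite /G mulrA.
rewrite -(big_mkord xpredT G).
case: (leqP lo hi) => lh.
  have hK : (hi <= K.+1)%N by rewrite /hi; lia.
  rewrite (big_cat_nat _ (n := lo)) //=; last by lia.
  rewrite big1_seq ?add0r; last first.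
    by move=> i /andP [_]; rewrite mem_index_iota => /andP [_ /z1].
  rewrite (big_cat_nat _ (n := hi) (p := K.+1)) //=.
  rewrite [X in _ + X]big1_seq ?addr0 //.
  by move=> i /andP [_]; rewrite mem_index_iota => /andP [h1 h2]; apply: z2 => //; lia.
rewrite [RHS]big_geq; last by lia.
rewrite big1_seq // => i /andP [_]; rewrite mem_index_iota => /andP [_ h].
case: (ltnP i lo) => h'; first by apply: z1.
by apply: z2; lia.
Qed.
End Num.

Section LA.
Variable F : finFieldType.
Variable K : nat.
Local Notation q := #|F|.

Lemma card_ker_im a (N : 'M[F]_(a, K)) :
  (#|{: 'rV[F]_a}| <= #|[set u : 'rV[F]_a | (u *m N == 0)%R]| * q ^ (\rank N))%N.
Proof.
set N0 := #|[set u : 'rV[F]_a | (u *m N == 0)%R]|.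
set im := [set u *m N | u in [set: 'rV[F]_a]].
have imS : (#|im| <= q ^ (\rank N))%N.
  have sub : im \subset [set z *m row_base N | z in [set: 'rV[F]_(\rank N)]].
    apply/subsetP => y /imsetP [u _ ->].
    apply/imsetP; exists (u *m col_base N); first by rewrite inE.
    by rewrite -mulmxA mulmx_base.
  apply: (leq_trans (subset_leq_card sub)); apply: (leq_trans (leq_imset_card _ _)).
  by rewrite cardsT card_mx mul1n.
have fib : forall y, y \in im -> (\sum_(u | true && (u *m N == y)) 1 = N0)%N.
  move=> y /imsetP [u0 _ ->].
  rewrite (reindex_inj (addIr u0)) /=.
  rewrite /N0 -sum1_card; apply: eq_bigl => u; rewrite inE mulmxDl.
  by rewrite -subr_eq0 addrK.
rewrite -sum1_card (partition_big (fun u => u *m N) (mem im)) /=; last first.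
  by move=> u _; apply/imsetP; exists u; rewrite ?inE.
rewrite (eq_bigr (fun _ => N0)); last by move=> y; apply: fib.
rewrite sum_nat_const mulnC leq_mul2l imS orbT //.
Qed.

Lemma rank_step m0 (V : 'M[F]_(m0, K)) (w : 'rV[F]_K) :
  \rank (V + <<w>>)%MS = if (w <= V)%MS then \rank V else (\rank V).+1.
Proof.
case: ifP => wV.
  have : (<<w>> <= V)%MS by rewrite genmxE.
  by move/addsmx_idPl => e; rewrite e.1.
have le1 : (\rank (V + <<w>>) <= \rank V + 1)%N.
  apply: leq_trans (mxrank_adds_leqif _ _).1 _.
  by rewrite leq_add2l mxrank_gen rank_leq_row.
have lt1 : (\rank V < \rank (V + <<w>>))%N.
  have := mxrank_leqif_sup (addsmxSl V <<w>>%MS).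
  rewrite ltn_neqAle => -[-> ->]; rewrite andbT.
  apply: contraFN wV => sub.
  by rewrite -genmxE; apply: submx_trans sub; apply: addsmxSr.
lia.
Qed.

Lemma core a (M : 'M[F]_(a, K)) m0 (V : 'M[F]_(m0, K)) (h : nat -> rat) :
  (1 < q)%N -> mono h ->
  \sum_(u : 'rV[F]_a) h (\rank (V + <<u *m M>>)%MS)
    <= \sum_(u : 'rV[F]_a) Tr q K h (\rank V).
Proof.
move=> q1 mh.
set r := \rank V.
set N := M *m cokermx V.
set N0 := #|[set u : 'rV[F]_a | (u *m N == 0)%R]|.
have key : (#|{: 'rV[F]_a}| <= N0 * q ^ (K - r))%N.
  apply: leq_trans (card_ker_im N) _; rewrite leq_mul2l; apply/orP; right.
  apply: leq_pexp2l; first lia.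
  by apply: leq_trans (mxrankM_maxr _ _) _; rewrite mxrank_coker.
have e1 : forall u : 'rV[F]_a, h (\rank (V + <<u *m M>>)%MS) =
     if u \in [set u : 'rV[F]_a | (u *m N == 0)%R] then h r else h r.+1.
  by move=> u; rewrite rank_step inE submxE /N mulmxA; case: ifP.
rewrite (eq_bigr _ (fun u _ => e1 u)).
set S := [set u : 'rV[F]_a | (u *m N == 0)%R].
rewrite (bigID (fun u => u \in S)) /=.
rewrite (eq_bigr (fun _ => h r)); last by move=> u ->.
rewrite [X in _ + X](eq_bigr (fun _ => h r.+1)); last by move=> u uS; rewrite (negbTE uS).
rewrite !sumr_const.
have cC : (#|S| + #|(fun i => i \notin S)| = #|{: 'rV[F]_a}|)%N by apply: cardC.
have cT : #|(fun _ : 'rV[F]_a => true)| = #|{: 'rV[F]_a}| by [].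
rewrite cT -cC /Tr /pp.
have Pgt0 : 0 < (#|F|%:R : rat) ^+ (K - r) by rewrite exprn_gt0 // ltr0n; lia.
have key' : (#|{: 'rV[F]_a}|%:R : rat) <= #|S|%:R * (#|F|%:R : rat) ^+ (K - r).
  by rewrite -natrX -natrM ler_nat.
move: key'; rewrite -cC natrD.
set s0 := (#|S|%:R : rat); set c0 := (#|_|%:R : rat).
set P := (#|F|%:R : rat) ^+ (K - r) => key'.
have hp : P^-1 * P = 1 by rewrite mulVf // gt_eqF.
have p0 : 0 <= P^-1 by rewrite invr_ge0 ltW.
have hs : P^-1 * (s0 + c0) <= s0.
  by have := ler_wpM2l p0 key'; rewrite mulrCA hp mulr1.
have d0 := mh r.
have e2 : 0 <= h r.+1 - h r by rewrite subr_ge0.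
have e3 : 0 <= s0 - P^-1 * (s0 + c0) by rewrite subr_ge0.
have := mulr_ge0 e2 e3.
rewrite mulrnDr -(mulr_natr (h r)) -(mulr_natr (h r.+1)).
rewrite -!(mulr_natr (P^-1 * h r + (1 - P^-1) * h r.+1)) -/s0 -/c0.
move=> H; rewrite -subr_ge0; apply: le_trans H _; rewrite le_eqVlt; apply/orP; left.
apply/eqP; ring.
Qed.
End LA.

Section Resample.
Variables (I : finType) (T_ : I -> finType).
Local Notation Om := {dffun forall j : I, T_ j}.

Definition upd (f : Om) (i : I) (x : T_ i) : Om :=
  @finfun I (fun j => T_ j) (dfwith (fun j => f j) x).

Lemma upd_in (f : Om) (i : I) (x : T_ i) : upd f x i = x.
Proof. by rewrite /upd ffunE dfwith_in. Qed.

Lemma upd_out (f : Om) (i : I) (x : T_ i) j : i != j -> upd f x j = f j.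
Proof. by move=> ij; rewrite /upd ffunE dfwith_out. Qed.

Lemma upd_upd (f : Om) (i : I) (x : T_ i) : upd (upd f x) (f i) = f.
Proof.
apply/ffunP => j; case: (eqVneq i j) => [<-|ij].
  by rewrite upd_in.
by rewrite !upd_out.
Qed.

Lemma resample i (phi : Om -> rat) :
  #|T_ i|%:R * \sum_f phi f = \sum_f \sum_(x : T_ i) phi (upd f x).
Proof.
pose beta (p : Om * T_ i) := (upd p.1 p.2, p.1 i).
have bK : involutive beta.
  by move=> [f x]; rewrite /beta /= upd_in upd_upd.
rewrite (pair_bigA _ (fun f (x : T_ i) => phi (upd f x))) /=.
rewrite [RHS](reindex_inj (inv_inj bK)) /=.
rewrite (eq_bigr (fun p => phi p.1)); last by move=> [f x] _; rewrite /= upd_upd.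
rewrite -(pair_bigA _ (fun f (x : T_ i) => phi f)) /= mulr_sumr; apply: eq_bigr => f _.
by rewrite sumr_const mulr_natl.
Qed.
End Resample.

Section Claim.
Variables (F : finFieldType) (K : nat) (I : finType) (T_ : I -> finType).
Variables (n : I -> nat) (R : forall i, T_ i -> 'M[F]_K).
Local Notation Om := {dffun forall j : I, T_ j}.
Local Notation q := #|F|.
Hypothesis q1 : (1 < q)%N.
Hypothesis Hpos : forall i, (0 < #|T_ i|)%N.
Hypothesis Hi : forall i (V : 'M[F]_K) h, mono h ->
  \sum_(x : T_ i) h (\rank (V + R x)%MS) <= \sum_(x : T_ i) E q K (n i) h (\rank V).

Lemma claim (s : seq I) : uniq s ->
  forall (V : Om -> 'M[F]_K) (w : Om -> rat),
  (forall f g : Om, (forall j, j \notin s -> f j = g j) -> V f = V g /\ w f = w g) ->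
  (forall f, 0 <= w f) -> forall h, mono h ->
  \sum_f w f * h (\rank (V f + \sum_(j <- s) R (f j))%MS)
   <= \sum_f w f * E q K (\sum_(j <- s) n j) h (\rank (V f)).
Proof.
elim: s => [|i s IH] /=.
  move=> _ V w _ _ h _; apply: ler_sum => f _.
  by rewrite !big_nil (addsmx0 _ (V f)).1.
move=> /andP [iNs us] V w HV w0 h mh.
under eq_bigr do rewrite big_cons addsmxA.
pose V' (f : Om) := (V f + R (f i))%MS.
have HV' : forall f g : Om, (forall j, j \notin s -> f j = g j) -> V' f = V' g /\ w f = w g.
  move=> f g fg.
  have [e1 e2] : V f = V g /\ w f = w g.
    by apply: HV => j; rewrite inE negb_or => /andP [_]; apply: fg.
  by rewrite /V' e1 e2 fg.
apply: le_trans (IH us V' w HV' w0 h mh) _.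
rewrite big_cons E_add.
set H := E q K (\sum_(j <- s) n j) h.
have mH : mono H by apply: E_mono.
have Tpos : (0 : rat) < #|T_ i|%:R by rewrite ltr0n.
rewrite -(ler_pM2l Tpos) !resample.
apply: ler_sum => f _.
have eqf : forall x : T_ i, V (upd f x) = V f /\ w (upd f x) = w f.
  move=> x; apply: HV => j; rewrite inE negb_or => /andP [ij _].
  by rewrite upd_out // eq_sym.
under eq_bigr => x _ do rewrite /V' upd_in (eqf x).1 (eqf x).2.
under [X in _ <= X]eq_bigr => x _ do rewrite (eqf x).1 (eqf x).2.
rewrite -!mulr_sumr; apply: ler_wpM2l; first exact: w0.
exact: Hi.
Qed.
End Claim.

Section Mat.
Variables (F : finFieldType) (m a : nat).
Local Notation RF := {dffun forall i : 'I_m, 'rV[F]_a}.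

Definition mat (g : RF) : 'M[F]_(m, a) := \matrix_i g i.
Definition rws (C : 'M[F]_(m, a)) : RF := @finfun 'I_m (fun _ => 'rV[F]_a) (fun i => row i C).

Lemma matK : cancel rws mat.
Proof. by move=> C; apply/row_matrixP => i; rewrite rowK ffunE. Qed.
Lemma rwsK : cancel mat rws.
Proof. by move=> g; apply/ffunP => i; rewrite ffunE rowK. Qed.

Lemma sum_mat (phi : 'M[F]_(m, a) -> rat) :
  \sum_(C : 'M[F]_(m, a)) phi C = \sum_(g : RF) phi (mat g).
Proof.
rewrite (reindex mat) //; exists rws => x _; [exact: rwsK | exact: matK].
Qed.
End Mat.

Section Relay.
Variables (F : finFieldType) (K : nat).
Local Notation q := #|F|.
Hypothesis q1 : (1 < q)%N.

Lemma relay NR a (M : 'M[F]_(a, K)) (B : {set 'I_NR}) (V : 'M[F]_K) h : mono h ->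
  \sum_(x : 'M[F]_(NR, a)) h (\rank (V + \sum_(r <- enum B) <<row r x *m M>>)%MS)
   <= \sum_(x : 'M[F]_(NR, a)) E q K #|B| h (\rank V).
Proof.
move=> mh; rewrite !sum_mat.
under eq_bigr => g _ do under eq_big_seq => r _ do rewrite rowK.
have Hpos : forall i : 'I_NR, (0 < #|'rV[F]_a|)%N.
  by move=> i; rewrite card_mx expn_gt0 (ltn_trans _ q1).
have H := @claim F K 'I_NR (fun _ => 'rV[F]_a) (fun _ => 1%N) (fun _ u => <<u *m M>>%MS)
   q1 Hpos (fun i V' h' mh' => core M V' q1 mh') (enum B) (enum_uniq _) (fun _ => V) (fun _ => 1)
   (fun _ _ _ => conj erefl erefl) (fun _ => ler01) h mh.
move: H; rewrite sum1_size -cardE => H.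
apply: le_trans (le_trans H _).
  by rewrite le_eqVlt; apply/orP; left; apply/eqP; apply: eq_bigr => g _; rewrite mul1r.
by rewrite le_eqVlt; apply/orP; left; apply/eqP; apply: eq_bigr => g _; rewrite mul1r.
Qed.
End Relay.

Section Struct.
Variables (F : finFieldType) (K : nat).

Lemma subrows_sub N (S : {set 'I_N}) (C : 'M[F]_(N, K)) m0 (Y : 'M[F]_(m0, K)) :
  (forall i, i \in S -> (row i C <= Y)%MS) -> (subrows S C <= Y)%MS.
Proof.
move=> H; apply/row_subP => k; rewrite /subrows row_rowsub; apply: H; exact: enum_valP.
Qed.

Lemma sum_sup_seq (I : eqType) (s : seq I) (Fm : I -> 'M[F]_K) i :
  i \in s -> (Fm i <= \sum_(j <- s) Fm j)%MS.
Proof.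
elim: s => [//|j s IH]; rewrite inE big_cons => /orP [/eqP ->|js].
  exact: addsmxSl.
by apply: submx_trans (IH js) _; apply: addsmxSr.
Qed.

Lemma sum_sup_gen (I : eqType) (s : seq I) m0 (Fm : I -> 'M[F]_(m0, K)) i :
  i \in s -> (Fm i <= \sum_(j <- s) <<Fm j>>)%MS.
Proof.
move=> H; have := @sum_sup_seq I s (fun j => <<Fm j>>%MS) i H.
by rewrite genmxE.
Qed.

Lemma mxcol_sub L (p_ : 'I_L -> nat) (B_ : forall j, 'M[F]_(p_ j, K)) m0 (Y : 'M[F]_(m0, K)) :
  (forall j, (B_ j <= Y)%MS) -> (\mxcol_j B_ j <= Y)%MS.
Proof.
move=> H; apply/row_subP => i; rewrite row_mxcol; apply: submx_trans (H _); exact: row_sub.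
Qed.
End Struct.

Section Main.
Variables (F : finFieldType) (K L NS NR : nat).
Variables (AD : {set 'I_NS}) (A : 'I_L -> {set 'I_NS}) (B : 'I_L -> {set 'I_NR}).
Local Notation T := ((\bigcup_(j < L) A j) :\: AD).
Local Notation Gt := {dffun forall j : 'I_L, 'M[F]_(NR, #|A j|)}.

Definition VS (C : 'M[F]_(NS, K)) := (\sum_(i <- enum AD) <<row i C>>)%MS.
Definition VT (C : 'M[F]_(NS, K)) := (\sum_(i <- enum T) <<row i C>>)%MS.
Definition RR (C : 'M[F]_(NS, K)) (j : 'I_L) (x : 'M[F]_(NR, #|A j|)) :=
  (\sum_(r <- enum (B j)) <<row r x *m subrows (A j) C>>)%MS.
Definition RG C (G : Gt) := (\sum_(j <- index_enum 'I_L) RR C (G j))%MS.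

Lemma row_VS C i : i \in AD -> (row i C <= VS C)%MS.
Proof.
by move=> iA; apply: (sum_sup_gen (fun i => row i C)); rewrite mem_enum.
Qed.

Lemma CD_le1 C G : (CD AD A B C G <= VS C + RG C G)%MS.
Proof.
rewrite /CD col_mx_sub; apply/andP; split.
  apply: subrows_sub => i iA; apply: submx_trans (addsmxSl _ _); exact: row_VS.
apply: mxcol_sub => j; apply: submx_trans (addsmxSr _ _).
apply: submx_trans (@sum_sup_seq _ _ _ _ (fun j => RR C (G j)) j _); last by rewrite mem_index_enum.
apply: subrows_sub => r rB; rewrite row_mul.
by apply: (sum_sup_gen (fun r => row r (G j) *m subrows (A j) C)); rewrite mem_enum.
Qed.

Lemma CD_le2 C G : (CD AD A B C G <= VS C + VT C)%MS.
Proof.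
rewrite /CD col_mx_sub; apply/andP; split.
  apply: subrows_sub => i iA; apply: submx_trans (addsmxSl _ _); exact: row_VS.
apply: mxcol_sub => j.
apply: submx_trans (rowsub_sub _ _) _; apply: submx_trans (submxMl _ _) _.
apply: subrows_sub => i iAj.
case: (boolP (i \in AD)) => iAD.
  apply: submx_trans (addsmxSl _ _); exact: row_VS.
apply: submx_trans (addsmxSr _ _).
apply: (sum_sup_gen (fun i => row i C)).
rewrite mem_enum inE iAD /=.
by apply/bigcupP; exists j.
Qed.
End Main.


Lemma pointwise (F : finFieldType) K L NS NR (AD : {set 'I_NS}) (A : 'I_L -> {set 'I_NS})
  (B : 'I_L -> {set 'I_NR}) (C : 'M[F]_(NS, K)) (G : {dffun forall j : 'I_L, 'M[F]_(NR, #|A j|)}) :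
  ((\rank (CD AD A B C G) == K)%N%:R : rat) <=
    ind K (\rank (VS AD C + VT AD A C)%MS) * ind K (\rank (VS AD C + RG B C G)%MS).
Proof.
case: eqP => [e|_]; last by rewrite mulr_ge0 ?ind_ge0.
have h1 := mxrankS (CD_le1 AD B C G); have h2 := mxrankS (CD_le2 AD B C G).
rewrite /ind; have -> : (K <= \rank (VS AD C + VT AD A C)%MS)%N by lia.
by have -> : (K <= \rank (VS AD C + RG B C G)%MS)%N by lia.
Qed.

Unset Implicit Arguments.
Theorem lemma2 (F : finFieldType) (q K L NS NR : nat)
  (hq : #|F| = q) (hK : (1 <= K)%N) (hL : (1 <= L)%N)
  (hNS : (K <= NS)%N) (hNR : (1 <= NR)%N)
  (AD : {set 'I_NS}) (A : 'I_L -> {set 'I_NS}) (B : 'I_L -> {set 'I_NR}) :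
  let m := #|\bigcup_(j < L) A j| in
  let mD := #|AD| in
  let mRD := #|AD :&: \bigcup_(j < L) A j| in
  let m' := (\sum_(j < L) #|B j|)%N in
  PrX F K AD A B <= P2 q (m' + mD) (m - mRD + mD) mD K.
Proof.
cbv zeta.
have q1 : (1 < #|F|)%N.
  exact: card_finNzRing_gt1.
subst q.
set f := E #|F| K (\sum_(j < L) #|B j|)%N (ind K).
set T := ((\bigcup_(j < L) A j) :\: AD).
set gT := E #|F| K #|T| (ind K).
have fm : mono f := E_mono q1 K _ (ind_mono q1 K).
have gm : mono gT := E_mono q1 K _ (ind_mono q1 K).
have f0 : forall r, 0 <= f r := E_ge0 q1 K _ (ind_ge0 K).
have g0 : forall r, 0 <= gT r := E_ge0 q1 K _ (ind_ge0 K).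
have key : \sum_(C : 'M[F]_(NS, K)) \sum_(G : {dffun forall j : 'I_L, 'M[F]_(NR, #|A j|)}) ((\rank (CD AD A B C G) == K)%N%:R : rat)
   <= #|{: 'M[F]_(NS, K)}|%:R * #|{: {dffun forall j : 'I_L, 'M[F]_(NR, #|A j|)}}|%:R * E #|F| K #|AD| (fun r => f r * gT r) 0.
  pose i1 (C : 'M[F]_(NS, K)) := ind K (\rank (VS AD C + VT AD A C)%MS).
  have S1 : forall C : 'M[F]_(NS, K),
      \sum_(G : {dffun forall j : 'I_L, 'M[F]_(NR, #|A j|)}) ((\rank (CD AD A B C G) == K)%N%:R : rat)
      <= #|{: {dffun forall j : 'I_L, 'M[F]_(NR, #|A j|)}}|%:R * (i1 C * f (\rank (VS AD C))).
    move=> C.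
    have P1 : \sum_(G : {dffun forall j : 'I_L, 'M[F]_(NR, #|A j|)}) ((\rank (CD AD A B C G) == K)%N%:R : rat)
       <= \sum_(G : {dffun forall j : 'I_L, 'M[F]_(NR, #|A j|)}) i1 C * ind K (\rank (VS AD C + RG B C G)%MS).
      by apply: ler_sum => G _; apply: pointwise.
    apply: le_trans P1 _.
    have Hpos : forall j : 'I_L, (0 < #|'M[F]_(NR, #|A j|)|)%N.
      by move=> j; rewrite card_mx expn_gt0 (ltn_trans _ q1).
    have H := @claim F K 'I_L (fun j => 'M[F]_(NR, #|A j|)) (fun j => #|B j|)
      (fun j x => RR B C x) q1 Hpos
      (fun j V h mh => relay q1 (subrows (A j) C) (B j) V mh)
      (index_enum 'I_L) (index_enum_uniq _) (fun _ => VS AD C) (fun _ => i1 C)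
      (fun _ _ _ => conj erefl erefl) (fun _ => ind_ge0 _ _) (ind K) (ind_mono q1 K).
    apply: le_trans H _.
    by rewrite sumr_const -[_ *+ _]mulr_natl /f.
  apply: le_trans (ler_sum _ (fun C _ => S1 C)) _.
  rewrite -mulr_sumr.
  set cC := (#|{: 'M[F]_(NS, K)}|%:R : rat).
  set cG := (#|{: {dffun forall j : 'I_L, 'M[F]_(NR, #|A j|)}}|%:R : rat).
  set EE := E #|F| K #|AD| (fun r => f r * gT r) 0.
  have -> : cC * cG * EE = cG * (cC * EE) by ring.
  rewrite ler_pM2l; last first.
    rewrite ltr0n; apply/card_gt0P.
    by exists (@finfun _ (fun j => 'M[F]_(NR, #|A j|)) (fun j => 0)).
  pose VSg (g : {dffun forall i : 'I_NS, 'rV[F]_K}) := (\sum_(i <- enum AD) <<g i>>)%MS.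
  pose VTg (g : {dffun forall i : 'I_NS, 'rV[F]_K}) := (\sum_(i <- enum T) <<g i>>)%MS.
  have VSm : forall g, VS AD (mat g) = VSg g.
    by move=> g; rewrite /VS /VSg; apply: eq_bigr => i _; rewrite rowK.
  have VTm : forall g, VT AD A (mat g) = VTg g.
    by move=> g; rewrite /VT /VTg; apply: eq_bigr => i _; rewrite rowK.
  rewrite (sum_mat (fun C => i1 C * f (\rank (VS AD C)))).
  have -> : cC * EE = \sum_(g : {dffun forall i : 'I_NS, 'rV[F]_K}) EE.
    by rewrite -(sum_mat (fun _ => EE)) sumr_const -mulr_natl.
  rewrite (eq_bigr (fun g => f (\rank (VSg g)) * ind K (\rank (VSg g + VTg g)%MS))); last first.
    by move=> g _; rewrite /i1 VSm VTm mulrC.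
  have core1 : forall (i : 'I_NS) (V : 'M[F]_K) h, mono h ->
      \sum_(x : 'rV[F]_K) h (\rank (V + <<x>>)%MS) <= \sum_(x : 'rV[F]_K) E #|F| K 1 h (\rank V).
    move=> i V h mh; have := core 1%:M V q1 mh.
    by under eq_bigr do rewrite mulmx1.
  have Hpos : forall i : 'I_NS, (0 < #|'rV[F]_K|)%N.
    by move=> j; rewrite card_mx expn_gt0 (ltn_trans _ q1).
  have HV1 : forall g1 g2 : {dffun forall i : 'I_NS, 'rV[F]_K},
      (forall j, j \notin enum T -> g1 j = g2 j) ->
      VSg g1 = VSg g2 /\ f (\rank (VSg g1)) = f (\rank (VSg g2)).
    move=> g1 g2 e.
    have -> : VSg g1 = VSg g2; last by [].
    apply: eq_big_seq => i; rewrite mem_enum => iA; rewrite e //.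
    by rewrite mem_enum /T inE iA.
  have H1 := @claim F K 'I_NS (fun _ => 'rV[F]_K) (fun _ => 1%N) (fun _ u => <<u>>%MS)
    q1 Hpos core1 (enum T) (enum_uniq _) VSg (fun g => f (\rank (VSg g))) HV1
    (fun g => f0 _) (ind K) (ind_mono q1 K).
  apply: le_trans H1 _.
  rewrite sum1_size -cardE -/gT.
  have fgm : mono (fun r => f r * gT r).
    by move=> r; apply: ler_pM; rewrite ?f0 ?g0 ?fm ?gm.
  have H2 := @claim F K 'I_NS (fun _ => 'rV[F]_K) (fun _ => 1%N) (fun _ u => <<u>>%MS)
    q1 Hpos core1 (enum AD) (enum_uniq _) (fun _ => 0) (fun _ => 1)
    (fun _ _ _ => conj erefl erefl) (fun _ => ler01) _ fgm.
  move: H2; rewrite sum1_size -cardE mxrank0 => H2.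
  apply: le_trans (le_trans _ H2) _.
    rewrite le_eqVlt; apply/orP; left; apply/eqP; apply: eq_bigr => g _.
    by rewrite mul1r (adds0mx _ (VSg g)).1.
  rewrite le_eqVlt; apply/orP; left; apply/eqP; apply: eq_bigr => g _.
  by rewrite mul1r.
have eqE : E #|F| K #|AD| (fun r => f r * gT r) 0 =
    P2 #|F| ((\sum_(j < L) #|B j|)%N + #|AD|)
       (#|\bigcup_(j < L) A j| - #|AD :&: \bigcup_(j < L) A j| + #|AD|) #|AD| K.
  rewrite E_rank //.
  rewrite (eq_bigr (fun i : 'I_K.+1 => Prank #|F| #|AD| K i *
     (Pfull #|F| (\sum_(j < L) #|B j|)%N (K - i) * Pfull #|F| #|T| (K - i)))); last first.
    by move=> i _; rewrite /f /gT !E_ind // -ltnS ltn_ord.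
  by rewrite P2_eq // /T cardsD setIC.
rewrite -eqE /PrX card_prod.
have pos : (0 : rat) < (#|{: 'M[F]_(NS, K)}| * #|{: {dffun forall j : 'I_L, 'M[F]_(NR, #|A j|)}}|)%N%:R.
  rewrite ltr0n muln_gt0; apply/andP; split; apply/card_gt0P.
    by exists 0.
  by exists (@finfun _ (fun j => 'M[F]_(NR, #|A j|)) (fun j => 0)).
rewrite ler_pdivrMr //.
apply: le_trans (le_trans _ key) _.
  rewrite le_eqVlt; apply/orP; left; apply/eqP.
  rewrite (pair_bigA _ (fun C G => ((\rank (CD AD A B C G) == K)%N%:R : rat))) /=.
  rewrite -sum1_card natr_sum big_mkcond /=; apply: eq_bigr => x _.
  by rewrite inE; case: (_ == _).
by rewrite natrM mulrC mulrA.
Qed.
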